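(* Let $P\in N_1$ be a sum of $4$ monomials, not necessarily distinct (i.e. $P(1)=4$). Then $P$ has unique factorisation inside $N_1$: any two factorisations of $P$ into irreducible elements of $N_1$ coincide up to the order of the factors.
   Context: $N_1=\mathbb{Z}_{\ge0}[X]$ is the semiring of univariate polynomials with nonnegative integer coefficients. An element $Q\neq0,1$ of $N_1$ is irreducible if in every factorisation $Q=ST$ with $S,T\in N_1$ one of $S,T$ is $1$. *)

(* Defs.v *)
From HB Require Import structures.
From mathcomp Require Import all_boot all_algebra.
Set Implicit Arguments. Unset Strict Implicit. Unset Printing Implicit Defensive.
Import GRing.Theory.
Local Open Scope ring_scope.

(* N_1 = Z_{>=0}[X] is represented by {poly nat} (nat is a semiring in mathcomp). *)

Definition N1_irreducible (Q : {poly nat}) : Prop :=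
  Q <> 0 /\ Q <> 1 /\ forall S T : {poly nat}, Q = S * T -> S = 1 \/ T = 1.

Definition N1_irr_factorisation (P : {poly nat}) (s : seq {poly nat}) : Prop :=
  (forall q, q \in s -> N1_irreducible q) /\ \prod_(q <- s) q = P.

(* Main.v *)
Require Import Defs.
From mathcomp Require Import all_boot all_algebra zify.
Import GRing.Theory.
Local Open Scope ring_scope.

Lemma addE (a b : nat) : (a + b)%R = (a + b)%N. Proof. by []. Qed.
Lemma mulE (a b : nat) : (a * b)%R = (a * b)%N. Proof. by []. Qed.

Lemma val0 (Q : {poly nat}) : Q.[1%N] = 0%N -> Q = 0.
Proof.
elim/poly_ind: Q => [|p c IH]; first by rewrite horner0.
 rewrite hornerMXaddC mulr1 addE => H.
have [h1 h2] : p.[1%N] = 0%N /\ c = 0%N by lia.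
by rewrite IH // h2 mul0r add0r.
Qed.

Lemma val1 (Q : {poly nat}) : Q.[1%N] = 1%N -> exists k, Q = 'X^k.
Proof.
elim/poly_ind: Q => [|p c IH]; first by rewrite horner0.
 rewrite hornerMXaddC mulr1 addE => H.
have [[h1 h2]|[h1 h2]] : (p.[1%N] = 0%N /\ c = 1%N) \/ (p.[1%N] = 1%N /\ c = 0%N) by lia.
  by exists 0%N; rewrite (val0 _ h1) h2 mul0r add0r expr0.
have [k ->] := IH h1; exists k.+1; by rewrite h2 addr0 exprSr.
Qed.

Lemma val2 (Q : {poly nat}) : Q.[1%N] = 2%N -> exists j k, Q = 'X^j + 'X^k.
Proof.
elim/poly_ind: Q => [|p c IH]; first by rewrite horner0.
 rewrite hornerMXaddC mulr1 addE => H.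
have [[h1 h2]|[[h1 h2]|[h1 h2]]] : (p.[1%N] = 0%N /\ c = 2%N) \/ (p.[1%N] = 1%N /\ c = 1%N) \/ (p.[1%N] = 2%N /\ c = 0%N) by lia.
- by exists 0%N, 0%N; rewrite (val0 _ h1) h2 mul0r add0r expr0 -polyC1 -polyCD.
- have [k ->] := val1 _ h1; exists k.+1, 0%N; by rewrite h2 exprSr expr0.
- have [j [k ->]] := IH h1; exists j.+1, k.+1; by rewrite h2 addr0 !exprSr mulrDl.
Qed.

Lemma coefpair (a b i : nat) : ((1 + 'X^a) * (1 + 'X^b) : {poly nat})`_i
   = ((i == 0%N) + (i == a) + (i == b) + (i == (a + b)%N))%N.
Proof.
rewrite mulrDl !mulrDr !mul1r mulr1 -exprD !coefD !coefXn coef1 !natn.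
rewrite /GRing.add /=; lia.
Qed.

Lemma expo (a b c d : nat) : (a <= b)%N -> (c <= d)%N ->
  (forall i, ((i == 0%N) + (i == a) + (i == b) + (i == (a + b)%N))%N =
             ((i == 0%N) + (i == c) + (i == d) + (i == (c + d)%N))%N) ->
  a = c /\ b = d.
Proof.
have key : forall a b c d : nat, (a <= b)%N -> (c <= d)%N ->
  (forall i, ((i == 0%N) + (i == a) + (i == b) + (i == (a + b)%N))%N =
             ((i == 0%N) + (i == c) + (i == d) + (i == (c + d)%N))%N) ->
  (a <= c)%N.
  move=> a' b' c' d' h1 h2 F; rewrite leqNgt; apply/negP => lt.
  move: (F c'); rewrite eqxx (ltn_eqF lt) (ltn_eqF (leq_trans lt h1)).
  rewrite (ltn_eqF (leq_trans lt (leq_addr _ _))); lia.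
move=> h1 h2 F.
have ac : a = c.
  by apply/eqP; rewrite eqn_leq (key a b c d) // (key c d a b) // => i; rewrite F.
subst c.
have key2 : forall b d : nat, (a <= b)%N -> (a <= d)%N ->
  (forall i, ((i == 0%N) + (i == a) + (i == b) + (i == (a + b)%N))%N =
             ((i == 0%N) + (i == a) + (i == d) + (i == (a + d)%N))%N) ->
  (b <= d)%N.
  move=> b' d' h1' h2' F'; rewrite leqNgt; apply/negP => lt.
  move: (F' d'); rewrite eqxx (ltn_eqF lt).
  rewrite (ltn_eqF (leq_trans lt (leq_addl _ _))); lia.
split=> //; apply/eqP; rewrite eqn_leq (key2 b d) // (key2 d b) // => i; rewrite F.
Qed.

Lemma perm2 (T : eqType) (x y : T) : perm_eq [:: x; y] [:: y; x].
Proof. by rewrite -[[:: x; y]]/([:: x] ++ [:: y]) (perm_catC [:: x] [:: y]) perm_refl. Qed.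

Lemma pairperm (a b c d : nat) : ((1+'X^a)*(1+'X^b) : {poly nat}) = (1+'X^c)*(1+'X^d) ->
  perm_eq [:: (1+'X^a : {poly nat}); 1+'X^b] [:: 1+'X^c; 1+'X^d].
Proof.
wlog hab: a b / (a <= b)%N.
  move=> W; case: (leqP a b) => h; first exact: W.
  move=> E; rewrite (perm_catC [:: 1 + 'X^a] [:: 1 + 'X^b]) /=.
  by apply: W (ltnW h) _; rewrite mulrC.
wlog hcd: c d / (c <= d)%N.
  move=> W; case: (leqP c d) => h; first exact: W.
  move=> E; rewrite perm_sym (perm_catC [:: 1 + 'X^c] [:: 1 + 'X^d]) /= perm_sym.
  by apply: W (ltnW h) _; rewrite [RHS]mulrC.
move=> E; have [-> ->] := expo a b c d hab hcd (fun i => ltac:(by rewrite -!coefpair E)).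
exact: perm_refl.
Qed.

Lemma X_neq1 : ('X : {poly nat}) <> 1.
Proof. by move=> h; move: (coefX nat 0); rewrite h coef1. Qed.

Lemma Xn_neq1 k : ('X^(k.+1) : {poly nat}) <> 1.
Proof. by move=> h; move: (coefXn nat k.+1 0); rewrite h coef1. Qed.

Lemma irr_val_nz (Q : {poly nat}) : N1_irreducible Q -> Q.[1%N] <> 0%N.
Proof. by move=> [h _] /val0. Qed.

Lemma irr_val1 (Q : {poly nat}) : N1_irreducible Q -> Q.[1%N] = 1%N -> Q = 'X.
Proof.
move=> [h0 [h1 hi]] /val1 [[|k] EQ]; first by rewrite EQ expr0 in h1.
rewrite EQ exprSr in hi; case: (hi _ _ erefl) => E.
  by rewrite EQ exprSr E mul1r.
by case: X_neq1.
Qed.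

Lemma decomp0 (Q : {poly nat}) : exists p, Q = p * 'X + (Q`_0)%:P.
Proof.
elim/poly_ind: Q => [|p c _]; first by exists 0; rewrite mul0r coef0 add0r.
by exists p; rewrite coefD coefMX coefC /= add0r.
Qed.

Lemma irr_c0 (Q : {poly nat}) : N1_irreducible Q -> Q <> 'X -> Q`_0 <> 0%N.
Proof.
move=> [h0 [h1 hi]] hX c0; have [p E] := decomp0 Q.
rewrite c0 addr0 in E; case: (hi _ _ E) => E'.
  by apply: hX; rewrite E E' mul1r.
by case: X_neq1.
Qed.

Lemma val2c (Q : {poly nat}) : Q.[1%N] = 2%N -> Q`_0 <> 0%N -> exists a, Q = 1 + 'X^a.
Proof.
move=> /val2 [j [k ->]]; rewrite coefD !coefXn !natn.
case: j => [|j]; first by exists k; rewrite expr0.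
case: k => [|k]; first by exists j.+1; rewrite expr0 addrC.
by [].
Qed.

Lemma Xsplit m n (R R' : {poly nat}) : 'X^m * R = 'X^n * R' -> R`_0 <> 0%N -> R'`_0 <> 0%N -> m = n /\ R = R'.
Proof.
move=> E h1 h2.
have C : forall i, ('X^m * R)`_i = ('X^n * R')`_i by move=> i; rewrite E.
have mn : m = n.
  case: (ltngtP m n) => // h.
  - by move: (C m); rewrite !coefXnM ltnn h subnn => /h1.
  - by move: (C n); rewrite !coefXnM ltnn h subnn => /esym /h2.
subst; split=> //; apply/polyP => i; move: (C (i + n)%N).
by rewrite !coefXnM ltnNge leq_addl /= addnK.
Qed.

Lemma filter_nseq (T : eqType) (x : T) s : filter (pred1 x) s = nseq (count_mem x s) x.
Proof. by elim: s => //= y s IH; case: eqP => [->|] /=; rewrite IH. Qed.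

Lemma prod_c0 (r : seq {poly nat}) : (forall q, q \in r -> q`_0 <> 0%N) -> (\prod_(q <- r) q)`_0 <> 0%N.
Proof.
elim: r => [|y r IH] H; first by rewrite big_nil coef1.
rewrite big_cons coef0M mulE; apply/eqP; rewrite muln_eq0; apply/norP; split; apply/eqP.
  by apply: H; rewrite mem_head.
by apply: IH => q hq; apply: H; rewrite inE hq orbT.
Qed.

Lemma ab4 (a b : nat) : (1 < a)%N -> (1 < b)%N -> (a * b)%N = 4%N -> a = 2%N /\ b = 2%N.
Proof. move=> ha hb h; nia. Qed.

Lemma abc4 (a b c r : nat) : (1 < a)%N -> (1 < b)%N -> (1 < c)%N -> (0 < r)%N -> (a * (b * (c * r)))%N = 4%N -> False.
Proof. move=> ha hb hc hr; have := leq_mul ha (leq_mul hb (leq_mul hc hr)); lia. Qed.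

Lemma seqcase (r : seq {poly nat}) : (forall q, q \in r -> N1_irreducible q /\ q <> 'X) ->
  (\prod_(q <- r) q).[1%N] = 4%N ->
  (exists A, r = [:: A]) \/ (exists A B, r = [:: A; B] /\ A.[1%N] = 2%N /\ B.[1%N] = 2%N).
Proof.
move=> H.
have V : forall q, q \in r -> (2 <= q.[1%N])%N.
  move=> q /H [hi hX]; have := irr_val_nz _ hi.
  case E: (q.[1%N]) => [|[|k]] //= _; by case: hX; apply: irr_val1.
case: r H V => [|A [|B [|C r]]] H V; rewrite ?big_cons ?big_nil ?mulr1 ?hornerM ?mulE.
- by rewrite hornerE.
- by left; exists A.
- have := V A (mem_head _ _); have := V B; rewrite !inE eqxx orbT => /(_ isT) hB hA.
  move=> h; right; exists A, B; split => //; exact: ab4 _ _ hA hB h.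
- have := V A (mem_head _ _); have := V B; have := V C; rewrite !inE !eqxx !orbT.
  move=> /(_ isT) hC /(_ isT) hB hA.
  case: (posnP (\prod_(j <- r) j).[1%N]) => [->|hr]; first by rewrite !muln0.
  by move=> /(abc4 _ _ _ _ hA hB hC hr).
Qed.

Lemma one_val : (1 : {poly nat}).[1%N] = 1%N.
Proof. by rewrite -polyC1 hornerC. Qed.

Lemma split_fact (P : {poly nat}) s : N1_irr_factorisation P s ->
  P = 'X^(count_mem 'X s) * \prod_(q <- filter (predC (pred1 'X)) s) q
  /\ (\prod_(q <- filter (predC (pred1 'X)) s) q)`_0 <> 0%N
  /\ (forall q, q \in filter (predC (pred1 'X)) s -> N1_irreducible q /\ q <> 'X).
Proof.
move=> [Hirr <-].
have Hq : forall q, q \in filter (predC (pred1 'X)) s -> N1_irreducible q /\ q <> 'X.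
  move=> q; rewrite mem_filter /= => /andP [/eqP hX hs]; split => //; exact: Hirr.
split; last split => //.
  rewrite (bigID (pred1 'X)) /= big_filter; congr (_ * _).
  rewrite (eq_bigr (fun=> 'X)); last by move=> q /eqP.
  by rewrite big_const_seq iter_mulr_1.
apply: prod_c0 => q /Hq [hi hX]; exact: irr_c0.
Qed.

Theorem mainTheorem8 (P : {poly nat}) :
  P.[1%N] = 4%N ->
  forall s t : seq {poly nat},
    N1_irr_factorisation P s -> N1_irr_factorisation P t -> perm_eq s t.
Proof.
move=> HP s t Hs Ht.
have [Es [c0s Is]] := split_fact P s Hs.
have [Et [c0t It]] := split_fact P t Ht.
have [mn RR] := Xsplit _ _ _ _ (etrans (esym Es) Et) c0s c0t.
have Vs := HP; rewrite Es hornerM hornerXn expr1n mul1r in Vs.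
have Vt := HP; rewrite Et hornerM hornerXn expr1n mul1r in Vt.
rewrite -(perm_filterC (pred1 'X) s) perm_sym -(perm_filterC (pred1 'X) t) perm_sym.
apply: perm_cat; first by rewrite !filter_nseq mn perm_refl.
move: RR Is It Vs Vt.
move: (filter (predC (pred1 'X)) s) (filter (predC (pred1 'X)) t) => s' t' RR Is It Vs Vt.
case: (seqcase _ Is Vs) => [[A EA]|[A [B [EA [vA vB]]]]];
  case: (seqcase _ It Vt) => [[C EC]|[C [D [EC [vC vD]]]]];
  subst s' t'; move: RR Is It; rewrite !big_cons !big_nil !mulr1 => RR Is It.
- by rewrite RR perm_refl.
- have [hi _] := Is A (mem_head _ _).
  case: hi => _ [_ /(_ _ _ RR)] [E|E]; [move: vC|move: vD]; by rewrite E one_val.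
- have [hi _] := It C (mem_head _ _).
  case: hi => _ [_ /(_ _ _ (esym RR))] [E|E]; [move: vA|move: vB]; by rewrite E one_val.
- have c0 : forall q, N1_irreducible q /\ q <> 'X -> q`_0 <> 0%N.
    by move=> q [hi hX]; exact: irr_c0.
  have [a Ea] := val2c _ vA (c0 _ (Is A (mem_head _ _))).
  have [b Eb] := val2c _ vB (c0 _ (Is B ltac:(by rewrite !inE eqxx orbT))).
  have [c Ec] := val2c _ vC (c0 _ (It C (mem_head _ _))).
  have [d Ed] := val2c _ vD (c0 _ (It D ltac:(by rewrite !inE eqxx orbT))).
  subst A B C D; exact: pairperm.
Qed.
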